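(* Let $k$ be a field and $d$ a positive integer such that the characteristic of $k$ does not divide $d$ (i.e. $d\cdot 1_k\neq 0$). Then $R_1^{(d)}$ is a (two-sided) ideal of $k_0\langle X\rangle$; in particular $R_1^{(d)}=R_2^{(d)}$.
   Context: Let $X=\{x_1,x_2,\ldots\}$ be a countably infinite set and let $k_0\langle X\rangle$ denote the free associative $k$-algebra (without identity) on $X$. A $T$-space of $k_0\langle X\rangle$ is a $k$-linear subspace closed under every algebra endomorphism of $k_0\langle X\rangle$; the $T$-space generated by a subset is the smallest $T$-space containing it. For $v_1,\ldots,v_d\in k_0\langle X\rangle$, let $S_d(v_1,\ldots,v_d)=\sum_{\sigma\in\Sigma_d}\prod_{i=1}^d v_{\sigma(i)}$, where $\Sigma_d$ is the symmetric group on $d$ letters; write $S_d(x)=S_d(x_1,\ldots,x_d)$. Let $R_1^{(d)}$ be the $T$-space generated by $S_d(x)$, and let $R_2^{(d)}$ be the $T$-space generated by $R_1^{(d)}$ together with all products $u\,S_d(v_1,\ldots,v_d)$ with $u\in R_1^{(d)}$, $v_i\in k_0\langle X\rangle$. *)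

(* Defs.v *)
From mathcomp Require Import all_boot all_order all_algebra all_fingroup.
Set Implicit Arguments. Unset Strict Implicit. Unset Printing Implicit Defensive.
Import GRing.Theory.
Local Open Scope ring_scope.

(* Words over the alphabet X = {x_0, x_1, ...} (x_i is indexed by i : nat;
   x_{i+1} of the paper is x_i here). *)
Definition word := seq nat.

Section FreeAlg.
Variable k : fieldType.

(* Ambient space: all k-valued functions on words (formal noncommutative power
   series).  The free algebra without identity k_0<X> is the subset [kpoly]. *)
Definition kser := word -> k.

Definition kzero : kser := fun _ => 0.
Definition kadd (f g : kser) : kser := fun w => f w + g w.
Definition kscale (c : k) (f : kser) : kser := fun w => c * f w.
Definition kmul (f g : kser) : kser :=
  fun w => \sum_(i < (size w).+1) f (take i w) * g (drop i w).
(* unit of k<X> (only used to write products of lists; not in k_0<X>) *)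
Definition kone : kser := fun w => (w == [::])%:R.
Definition kvar (i : nat) : kser := fun w => (w == [:: i])%:R.

Definition kpoly (f : kser) : Prop :=
  f [::] = 0 /\ exists s : seq word, forall w, f w != 0 -> w \in s.

(* algebra endomorphisms of k_0<X> (maps on kpoly; values outside kpoly irrelevant) *)
Definition alg_endo (phi : kser -> kser) : Prop :=
  (forall f, kpoly f -> kpoly (phi f)) /\
  (forall f g, kpoly f -> kpoly g -> phi (kadd f g) = kadd (phi f) (phi g)) /\
  (forall c f, kpoly f -> phi (kscale c f) = kscale c (phi f)) /\
  (forall f g, kpoly f -> kpoly g -> phi (kmul f g) = kmul (phi f) (phi g)).

Definition is_subspace (V : kser -> Prop) : Prop :=
  (forall f, V f -> kpoly f) /\ V kzero /\
  (forall f g, V f -> V g -> V (kadd f g)) /\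
  (forall c f, V f -> V (kscale c f)).

Definition is_Tspace (V : kser -> Prop) : Prop :=
  is_subspace V /\ forall phi f, alg_endo phi -> V f -> V (phi f).

Definition Tspace_gen (S : kser -> Prop) : kser -> Prop :=
  fun f => forall V, is_Tspace V -> (forall g, S g -> V g) -> V f.

Definition is_ideal (V : kser -> Prop) : Prop :=
  is_subspace V /\
  forall f g, V f -> kpoly g -> V (kmul f g) /\ V (kmul g f).

Definition kprod (l : seq kser) : kser := foldr kmul kone l.

Definition Sd (d : nat) (v : 'I_d -> kser) : kser :=
  \big[kadd/kzero]_(s : 'S_d) kprod [seq v (s i) | i <- enum 'I_d].

Definition Sd_x (d : nat) : kser := Sd (fun i : 'I_d => kvar i).

Definition R1 (d : nat) : kser -> Prop := Tspace_gen (fun f => f = Sd_x d).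

Definition R2 (d : nat) : kser -> Prop :=
  Tspace_gen (fun f => R1 d f \/
    exists (u : kser) (v : 'I_d -> kser),
      R1 d u /\ (forall i, kpoly (v i)) /\ f = kmul u (Sd v)).

End FreeAlg.

(* Main.v *)
Require Import Defs.
From HB Require Import structures.
From mathcomp Require Import all_boot all_order all_algebra all_fingroup.
From mathcomp Require Import boolp.
Set Implicit Arguments. Unset Strict Implicit. Unset Printing Implicit Defensive.
Import GRing.Theory.
Local Open Scope ring_scope.

Lemma shift_sum (R : nmodType) n j (G : nat -> R) : (j <= n)%N ->
  \sum_(0 <= l < (n - j).+1) G l =
  \sum_(0 <= i < n.+1) (if (j <= i)%N then G (i - j)%N else 0).
Proof.
move=> hj.
rewrite [RHS](@big_cat_nat _ _ _ j) //=; last by rewrite ltnW.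
rewrite [X in _ = X + _]big_nat_cond [X in _ = X + _]big1 ?add0r; last first.
  by move=> i /andP[/andP[_ hi] _]; rewrite leqNgt hi.
rewrite -{2}(add0n j) big_addn subSn //.
by apply: eq_big_nat => i _; rewrite leq_addl addnK.
Qed.

Section Ring.
Variable k : fieldType.
Local Notation S := (kser k).

Lemma fext (f g : S) : (forall w, f w = g w) -> f = g.
Proof. move=> h; exact: functional_extensionality_dep. Qed.

Lemma kmulE (f g : S) w : kmul f g w =
  \sum_(0 <= i < (size w).+1) f (take i w) * g (drop i w).
Proof. by rewrite /kmul big_mkord. Qed.

Lemma kmulA : associative (@kmul k).
Proof.
move=> f g h; apply: fext => w; rewrite !kmulE.
set n := size w.
transitivity (\sum_(0 <= j < n.+1) \sum_(0 <= i < n.+1)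
   (if (j <= i)%N then f (take j w) * g (drop j (take i w)) * h (drop i w) else 0)).
  apply: eq_big_nat => j /andP[_ hj].
  rewrite kmulE mulr_sumr size_drop -/n shift_sum //.
  apply: eq_big_nat => i /andP[_ hi]; case: ifP => // hji.
  by rewrite take_drop drop_drop !subnK // mulrA.
rewrite exchange_big_nat /=; apply: eq_big_nat => i /andP[_ hi].
rewrite kmulE mulr_suml size_takel //.
rewrite (big_nat_widen _ _ _ _ _ (_ : i.+1 <= n.+1)%N) //.
rewrite [RHS]big_mkcond; apply: eq_big_nat => j /andP[_ hj]; rewrite ltnS.
by case: ifP => // hji; rewrite take_takel.
Qed.

Lemma kmul1 : left_id (@kone k) (@kmul k).
Proof.
move=> f; apply: fext => w; rewrite kmulE big_nat_recl //.
rewrite /kone take0 eqxx mul1r drop0.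
rewrite big_nat big1 ?addr0 // => i /andP[_ hi].
have: size (take i.+1 w) = i.+1 by rewrite size_takel.
by case: (take i.+1 w) => //= ? ? _; rewrite mul0r.
Qed.

Lemma kmul1r : right_id (@kone k) (@kmul k).
Proof.
move=> f; apply: fext => w; rewrite kmulE big_nat_recr //= /kone drop_size eqxx mulr1 take_size.
rewrite big_nat big1 ?add0r // => i /andP[_ hi].
have: size (drop i w) = (size w - i)%N by rewrite size_drop.
case: (drop i w) => /= [|? ? _]; last by rewrite mulr0.
by move/esym/eqP; rewrite subn_eq0 leqNgt hi.
Qed.

Lemma kmulDl : left_distributive (@kmul k) (@kadd k).
Proof.
move=> f g h; apply: fext => w; rewrite /kadd !kmulE -big_split /=.
by apply: eq_bigr => i _; rewrite mulrDl.
Qed.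

Lemma kmulDr : right_distributive (@kmul k) (@kadd k).
Proof.
move=> f g h; apply: fext => w; rewrite /kadd !kmulE -big_split /=.
by apply: eq_bigr => i _; rewrite mulrDr.
Qed.

Definition kopp (f : S) : S := fun w => - f w.

Lemma kaddA : associative (@kadd k).
Proof. by move=> f g h; apply: fext => w; rewrite /kadd addrA. Qed.
Lemma kaddC : commutative (@kadd k).
Proof. by move=> f g; apply: fext => w; rewrite /kadd addrC. Qed.
Lemma kadd0 : left_id (@kzero k) (@kadd k).
Proof. by move=> f; apply: fext => w; rewrite /kadd /kzero add0r. Qed.
Lemma kaddN : left_inverse (@kzero k) kopp (@kadd k).
Proof. by move=> f; apply: fext => w; rewrite /kadd /kzero /kopp addNr. Qed.

HB.instance Definition _ := gen_eqMixin S.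
HB.instance Definition _ := gen_choiceMixin S.
HB.instance Definition _ := GRing.isZmodule.Build S kaddA kaddC kadd0 kaddN.
HB.instance Definition _ := GRing.Zmodule_isPzRing.Build S kmulA kmul1 kmul1r kmulDl kmulDr.

Lemma kone_neq0 : (@kone k) != 0.
Proof.
apply/eqP => /(congr1 (fun f : S => f [::])); rewrite /kone eqxx /=.
by move/eqP; rewrite oner_eq0.
Qed.
HB.instance Definition _ := GRing.PzSemiRing_isNonZero.Build S kone_neq0.

Lemma addE (f g : S) : kadd f g = f + g. Proof. by []. Qed.
Lemma mulE (f g : S) : kmul f g = f * g. Proof. by []. Qed.
Lemma oneE : @kone k = 1 :> S. Proof. by []. Qed.
Lemma zeroE : @kzero k = 0 :> S. Proof. by []. Qed.
End Ring.


Section Comb.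
Variable R : pzRingType.

Definition Ssym n (f : 'I_n -> R) : R := \sum_(s : 'S_n) \prod_(i < n) f (s i).

Lemma Ssym_ext n (f g : 'I_n -> R) : f =1 g -> Ssym f = Ssym g.
Proof. by move=> e; apply: eq_bigr => s _; apply: eq_bigr => i _; rewrite e. Qed.

Lemma Ssym_perm n (f : 'I_n -> R) (t : 'S_n) : Ssym (fun i => f (t i)) = Ssym f.
Proof.
rewrite /Ssym [RHS](reindex_inj (mulIg t)) /=.
by apply: eq_bigr => s _; apply: eq_bigr => i _; rewrite permM.
Qed.

Lemma Ssym_permr n (f : 'I_n -> R) (t : 'S_n) :
  \sum_(s : 'S_n) \prod_(i < n) f (s (t i)) = Ssym f.
Proof.
rewrite /Ssym [RHS](reindex_inj (mulgI t)) /=.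
by apply: eq_bigr => s _; apply: eq_bigr => i _; rewrite permM.
Qed.

Lemma sum_liftperm n (F : 'S_n.+1 -> R) (j : 'I_n.+1) :
  \sum_(s : 'S_n.+1 | s ord0 == j) F s = \sum_(t : 'S_n) F (lift_perm ord0 j t).
Proof.
rewrite (reindex (lift_perm ord0 j)); last first.
  pose ulsf i (s : 'S_n.+1) k := odflt k (unlift (s i) (s (lift i k))).
  have ulsfK i (s : 'S_n.+1) k: lift (s i) (ulsf i s k) = s (lift i k).
    rewrite /ulsf; have:= neq_lift i k.
    by rewrite -(can_eq (permK s)) => /unlift_some[] ? ? ->.
  have inj_ulsf: injective (ulsf ord0 _).
    move=> s; apply: can_inj (ulsf (s ord0) s^-1%g) _ => k'.
    by rewrite {1}/ulsf ulsfK !permK liftK.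
  exists (fun s => perm (inj_ulsf s)) => [s _ | s].
    by apply/permP=> k'; rewrite permE /ulsf lift_perm_lift lift_perm_id liftK.
  move/(s _ =P _) => si0; apply/permP=> k.
  case: (unliftP ord0 k) => [k'|] ->; rewrite ?lift_perm_id //.
  by rewrite lift_perm_lift -si0 permE ulsfK.
by apply: eq_bigl => t; rewrite lift_perm_id eqxx.
Qed.

Lemma Srec n (f : 'I_n.+1 -> R) :
  Ssym f = \sum_(j < n.+1) f j * Ssym (fun i => f (lift j i)).
Proof.
rewrite /Ssym (partition_big (fun s : 'S_n.+1 => s ord0) xpredT) //=.
apply: eq_bigr => j _; rewrite sum_liftperm mulr_sumr.
apply: eq_bigr => t _; rewrite big_ord_recl lift_perm_id.
by congr (_ * _); apply: eq_bigr => i _; rewrite lift_perm_lift.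
Qed.


Definition cons0 n (u : R) (v : 'I_n -> R) : 'I_n.+1 -> R :=
  fun i => if unlift ord0 i is Some j then v j else u.
Definition upd n (v : 'I_n -> R) (a : 'I_n) (x : R) : 'I_n -> R :=
  fun i => if i == a then x else v i.

Lemma cons0_0 n u (v : 'I_n -> R) : cons0 u v ord0 = u.
Proof. by rewrite /cons0 unlift_none. Qed.
Lemma cons0_lift n u (v : 'I_n -> R) j : cons0 u v (lift ord0 j) = v j.
Proof. by rewrite /cons0 liftK. Qed.

Lemma Ssym0 (f g : 'I_0 -> R) : Ssym f = Ssym g.
Proof. by apply: eq_bigr => s _; rewrite !big_ord0. Qed.

Lemma lift_lift0 n (i : 'I_n.+1) (x : 'I_n) :
  lift (lift ord0 i) (lift ord0 x) = lift ord0 (lift i x).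
Proof.
apply: val_inj => /=; rewrite /bump /=.
by rewrite leq_add2l addnCA.
Qed.

Lemma lift_lift0_0 n (i : 'I_n.+1) : lift (lift ord0 i) ord0 = ord0 :> 'I_n.+2.
Proof. by apply: val_inj. Qed.

Lemma mergeL n (v : 'I_n -> R) (u : R) :
  \sum_(a < n) Ssym (upd v a (v a * u)) = Ssym (cons0 u v) - u * Ssym v.
Proof.
elim: n v u => [|m IH] v u.
  rewrite big_ord0 Srec big_ord1 cons0_0 (Ssym0 _ v) subrr //.
rewrite [in RHS]Srec [in RHS]big_ord_recl cons0_0.
rewrite (Ssym_ext (g := v)); last by move=> i; rewrite cons0_lift.
rewrite [RHS]addrAC subrr add0r.
transitivity (\sum_(a < m.+1) \sum_(i < m.+1)
   upd v a (v a * u) i * Ssym (fun j => upd v a (v a * u) (lift i j))).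
  by apply: eq_bigr => a _; rewrite Srec.
rewrite exchange_big /=; apply: eq_bigr => i _.
rewrite (bigD1_ord i) //=.
rewrite cons0_lift.
rewrite (Ssym_ext (f := fun j => cons0 u v (lift (lift ord0 i) j)) (g := cons0 u (fun j => v (lift i j)))); last first.
  move=> j; case: (unliftP ord0 j) => [j'|] ->.
    by rewrite lift_lift0 !cons0_lift.
  by rewrite lift_lift0_0 !cons0_0.
rewrite -[Ssym (cons0 _ _)](subrK (u * Ssym (fun j => v (lift i j)))) -IH.
rewrite mulrDr [RHS]addrC mulrA; congr (_ + _).
  rewrite {1}/upd eqxx; congr (_ * _); apply: Ssym_ext => j.
  by rewrite /upd eq_sym (negbTE (neq_lift i j)).
rewrite [RHS]mulr_sumr.
apply: eq_bigr => a _; rewrite {1}/upd (negbTE (neq_lift i a)); congr (_ * _).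
apply: Ssym_ext => j; rewrite /upd (inj_eq (@lift_inj _ i)).
by case: eqP => // ->.
Qed.



Lemma sum_merge n (f : 'I_n.+1 -> R) :
  \sum_(p < n.+1) \sum_(a < n)
     Ssym (upd (fun j => f (lift p j)) a (f (lift p a) * f p)) = Ssym f *+ n.
Proof.
transitivity (\sum_(p < n.+1) (Ssym f - f p * Ssym (fun j => f (lift p j)))).
  apply: eq_bigr => p _; rewrite mergeL; congr (_ - _).
  rewrite -(Ssym_perm f (lift_perm ord0 p 1)); apply: Ssym_ext => i.
  case: (unliftP ord0 i) => [i'|] ->.
    by rewrite cons0_lift lift_perm_lift perm1.
  by rewrite cons0_0 lift_perm_id.
by rewrite sumrB -Srec sumr_const card_ord mulrSr addrK.
Qed.

Lemma left_ident n (v : 'I_n -> R) (u : R) :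
  u * Ssym v *+ n =
  \sum_(p < n.+1) \sum_(a < n)
     Ssym (upd (fun j => cons0 u v (lift p j)) a (cons0 u v (lift p a) * cons0 u v p))
  - (\sum_(a < n) Ssym (upd v a (v a * u))) *+ n.
Proof.
rewrite sum_merge.
rewrite -[Ssym (cons0 u v)](subrK (u * Ssym v)) -mergeL.
by rewrite mulrnDl addrAC subrr add0r.
Qed.

End Comb.

Section Conv.
Variable R : pzRingType.

Lemma prod_conv n (F : 'I_n -> R) :
  \prod_(i < n) (F i : R^c) = \prod_(i < n) F (rev_ord i).
Proof.
elim: n F => [|n IH] F; first by rewrite !big_ord0.
rewrite big_ord_recl [RHS]big_ord_recr /=.
have -> : \prod_(i < n) (F (lift ord0 i) : R^c) = \prod_(i < n) F (lift ord0 (rev_ord i)) :> R.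
  exact: IH.
have -> : rev_ord ord_max = ord0 :> 'I_n.+1 by apply: val_inj; rewrite /= subnn.
congr (_ * _); apply: eq_bigr => i _; congr F; apply: val_inj => /=.
by rewrite /bump /= add1n subSS subnS prednK // subn_gt0.
Qed.

Lemma Ssym_conv n (f : 'I_n -> R) : @Ssym R^c n f = @Ssym R n f.
Proof.
rewrite -[@Ssym R n f](Ssym_permr f (perm (@rev_ord_inj n))).
rewrite /Ssym; apply: eq_bigr => s _; rewrite prod_conv.
by apply: eq_bigr => i _; rewrite permE.
Qed.

Lemma right_ident n (v : 'I_n -> R) (u : R) :
  Ssym v * u *+ n =
  \sum_(p < n.+1) \sum_(a < n)
     Ssym (upd (fun j => cons0 u v (lift p j)) a (cons0 u v p * cons0 u v (lift p a)))
  - (\sum_(a < n) Ssym (upd v a (u * v a))) *+ n.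
Proof.
have H := @left_ident R^c n v u.
rewrite Ssym_conv in H.
under [in RHS]eq_bigr do under eq_bigr do rewrite -Ssym_conv.
under [X in _ = _ - X *+ _]eq_bigr do rewrite -Ssym_conv.
exact: H.
Qed.
End Conv.


Section Subst.
Variable k : fieldType.
Local Notation S := (kser k).

Lemma addS (f g : S) w : (f + g) w = f w + g w. Proof. by []. Qed.
Lemma oppS (f : S) w : (- f) w = - f w. Proof. by []. Qed.
Lemma zeroS w : (0 : S) w = 0. Proof. by []. Qed.
Lemma sumS I (r : seq I) (P : pred I) (F : I -> S) w :
  (\sum_(i <- r | P i) F i) w = \sum_(i <- r | P i) F i w.
Proof. by elim/big_rec2: _ => // i y1 y2 _ <-. Qed.
Lemma scaleS c (f : S) w : kscale c f w = c * f w. Proof. by []. Qed.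

Lemma mulS0 (f g : S) : (f * g) [::] = f [::] * g [::].
Proof. by rewrite -mulE kmulE big_nat1. Qed.

Lemma kscale_mull c (f g : S) : kscale c f * g = kscale c (f * g).
Proof.
apply: fext => w; rewrite -!mulE scaleS !kmulE mulr_sumr.
by apply: eq_bigr => i _; rewrite scaleS mulrA.
Qed.
Lemma kscale_mulr c (f g : S) : f * kscale c g = kscale c (f * g).
Proof.
apply: fext => w; rewrite -!mulE scaleS !kmulE mulr_sumr.
by apply: eq_bigr => i _; rewrite scaleS mulrCA.
Qed.
Lemma kscaleD c (f g : S) : kscale c (f + g) = kscale c f + kscale c g.
Proof. by apply: fext => w; rewrite addS !scaleS addS mulrDr. Qed.
Lemma kscale_add c1 c2 (f : S) : kscale (c1 + c2) f = kscale c1 f + kscale c2 f.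
Proof. by apply: fext => w; rewrite addS !scaleS mulrDl. Qed.
Lemma kscaleA c1 c2 (f : S) : kscale c1 (kscale c2 f) = kscale (c1 * c2) f.
Proof. by apply: fext => w; rewrite !scaleS mulrA. Qed.
Lemma kscale1 (f : S) : kscale 1 f = f.
Proof. by apply: fext => w; rewrite scaleS mul1r. Qed.
Lemma kscale0 (f : S) : kscale 0 f = 0.
Proof. by apply: fext => w; rewrite scaleS mul0r. Qed.
Lemma kscaleN1 (f : S) : kscale (-1) f = - f.
Proof. by apply: fext => w; rewrite scaleS oppS mulN1r. Qed.
Lemma kscale_sum c I (r : seq I) (F : I -> S) :
  kscale c (\sum_(i <- r) F i) = \sum_(i <- r) kscale c (F i).
Proof. by apply: fext => w; rewrite scaleS !sumS mulr_sumr. Qed.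

Definition eqt n (f g : S) := forall w, (size w <= n)%N -> f w = g w.

Lemma eqt_mulr n (a f g : S) : a [::] = 0 -> eqt n f g -> eqt n.+1 (a * f) (a * g).
Proof.
move=> a0 e w hw; rewrite -!mulE !kmulE big_nat_recl // [RHS]big_nat_recl //.
rewrite take0 a0 !mul0r; congr (_ + _); apply: eq_big_nat => i /andP[_ hi].
by rewrite e // size_drop leq_subLR (leq_trans hw) // addSn ltnS leq_addl.
Qed.

Lemma eqt_mul n (f f' g g' : S) : eqt n f f' -> eqt n g g' -> eqt n (f * g) (f' * g').
Proof.
move=> e1 e2 w hw; rewrite -!mulE !kmulE; apply: eq_big_nat => i /andP[_ hi].
rewrite e1 ?e2 //; apply: leq_trans hw.
  by rewrite size_drop leq_subr.
by rewrite size_take; case: ifP.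
Qed.

Lemma eqt_add n (f f' g g' : S) : eqt n f f' -> eqt n g g' -> eqt n (f + g) (f' + g').
Proof. by move=> e1 e2 w hw; rewrite !addS e1 ?e2. Qed.

Lemma eqt_sum n I (r : seq I) (F G : I -> S) :
  (forall i, eqt n (F i) (G i)) -> eqt n (\sum_(i <- r) F i) (\sum_(i <- r) G i).
Proof. by move=> e w hw; rewrite !sumS; apply: eq_bigr => i _; rewrite e. Qed.

Lemma eqt_refl n (f : S) : eqt n f f. Proof. by []. Qed.
Lemma eqt_sym n (f g : S) : eqt n f g -> eqt n g f.
Proof. by move=> e w hw; rewrite e. Qed.
Lemma eqt_trans n (f g h : S) : eqt n f g -> eqt n g h -> eqt n f h.
Proof. by move=> e1 e2 w hw; rewrite e1 ?e2. Qed.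
Lemma eqt_le m n (f g : S) : (m <= n)%N -> eqt n f g -> eqt m f g.
Proof. by move=> hmn e w hw; rewrite e // (leq_trans hw). Qed.
Lemma eqt_all (f g : S) : (forall n, eqt n f g) -> f = g.
Proof. by move=> e; apply: fext => w; exact: (e (size w)). Qed.


Definition deriv (x : nat) (f : S) : S := fun w => f (x :: w).
Definition sc (c : k) : S := kscale c 1.

Lemma sc_at0 c : sc c [::] = c.
Proof. by rewrite /sc scaleS -oneE /kone eqxx mulr1. Qed.

Lemma scM c (f : S) : sc c * f = kscale c f.
Proof. by rewrite /sc kscale_mull mul1r. Qed.

Lemma derivD x (f g : S) : deriv x (f + g) = deriv x f + deriv x g.
Proof. by []. Qed.
Lemma derivZ x c (f : S) : deriv x (kscale c f) = kscale c (deriv x f).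
Proof. by []. Qed.

Lemma deriv_mul x (f g : S) :
  deriv x (f * g) = deriv x f * g + kscale (f [::]) (deriv x g).
Proof.
apply: fext => w; rewrite /deriv addS scaleS -!mulE !kmulE /= big_nat_recl //=.
by rewrite addrC.
Qed.

Variables (d : nat) (v : 'I_d -> S).
Hypothesis hv0 : forall x, v x [::] = 0.

Fixpoint Phi n (f : S) : S :=
  match n with
  | 0 => sc (f [::])
  | n'.+1 => sc (f [::]) + \sum_(x < d) v x * Phi n' (deriv x f)
  end.

Definition phi (f : S) : S := fun w => Phi (size w) f w.

Lemma vmul0 x (g : S) : (v x * g) [::] = 0.
Proof. by rewrite mulS0 hv0 mul0r. Qed.

Lemma Phi_at0 n f : Phi n f [::] = f [::].
Proof.
case: n => [|n] /=; first by rewrite sc_at0.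
rewrite addS sc_at0 sumS big1 ?addr0 // => x _; exact: vmul0.
Qed.

Lemma Phi_stable n : forall m f, (n <= m)%N -> eqt n (Phi n f) (Phi m f).
Proof.
elim: n => [|n IH] m f hnm.
  by move=> w; rewrite leqn0 size_eq0 => /eqP -> ; rewrite !Phi_at0.
case: m hnm => // m hnm; rewrite /=; apply: eqt_add => //; apply: eqt_sum => x.
exact: eqt_mulr (hv0 x) (IH _ _ hnm).
Qed.

Lemma phi_Phi n f : eqt n (phi f) (Phi n f).
Proof. by move=> w hw; rewrite /phi; apply: Phi_stable. Qed.

Lemma phi_eq f : phi f = sc (f [::]) + \sum_(x < d) v x * phi (deriv x f).
Proof.
apply: eqt_all => n; apply: (eqt_trans (g := Phi n f)); first exact: phi_Phi.
case: n => [|n] /=.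
  move=> w; rewrite leqn0 size_eq0 => /eqP -> /=.
  rewrite !addS sc_at0 !sumS big1 ?addr0 // => x _; exact: vmul0.
apply: eqt_add => //; apply: eqt_sum => x.
apply: eqt_mulr; first exact: hv0. apply: eqt_sym; exact: phi_Phi.
Qed.


Lemma Phi_add n : forall f g, Phi n (f + g) = Phi n f + Phi n g.
Proof.
elim: n => [|n IH] f g /=.
  by rewrite addS /sc kscale_add.
rewrite addS /sc kscale_add -!/(sc _).
under eq_bigr do rewrite derivD IH mulrDr.
by rewrite big_split /= addrACA.
Qed.

Lemma Phi_scale n : forall c f, Phi n (kscale c f) = kscale c (Phi n f).
Proof.
elim: n => [|n IH] c f /=.
  by rewrite scaleS /sc kscaleA.
rewrite scaleS kscaleD kscale_sum.
congr (_ + _); first by rewrite /sc kscaleA.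
by apply: eq_bigr => x _; rewrite derivZ IH kscale_mulr.
Qed.

Lemma phi_add f g : phi (f + g) = phi f + phi g.
Proof. by apply: fext => w; rewrite /phi Phi_add. Qed.
Lemma phi_scale c f : phi (kscale c f) = kscale c (phi f).
Proof. by apply: fext => w; rewrite /phi Phi_scale. Qed.
Lemma phi0 : phi 0 = 0.
Proof. by apply: (addrI (phi 0)); rewrite -phi_add !addr0. Qed.

Lemma phi_at0 f : phi f [::] = f [::].
Proof. by rewrite /phi Phi_at0. Qed.

Lemma phi_mul_eqt n : forall f g, eqt n (phi (f * g)) (phi f * phi g).
Proof.
elim: n => [|n IH] f g.
  move=> w; rewrite leqn0 size_eq0 => /eqP ->.
  by rewrite phi_at0 !mulS0 !phi_at0.
rewrite [phi (f * g)]phi_eq [phi f]phi_eq mulrDl scM mulS0.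
rewrite [X in kscale _ X]phi_eq kscaleD {1}/sc kscaleA -/(sc _) -addrA.
apply: eqt_add => //.
rewrite kscale_sum mulr_suml -big_split /=; apply: eqt_sum => x.
rewrite deriv_mul phi_add phi_scale mulrDr addrC kscale_mulr -mulrA.
apply: eqt_add => //; apply: eqt_mulr; first exact: hv0.
exact: IH.
Qed.

Lemma phi_mul f g : phi (f * g) = phi f * phi g.
Proof. apply: eqt_all => n; exact: phi_mul_eqt. Qed.


Lemma deriv1 x : deriv x 1 = 0.
Proof. by apply: fext => w; rewrite /deriv -oneE /kone. Qed.

Lemma phi1 : phi 1 = 1.
Proof.
rewrite phi_eq big1 ?addr0; last by move=> x _; rewrite deriv1 phi0 mulr0.
by rewrite /sc -oneE /kone eqxx kscale1.
Qed.

Lemma phi_var (i : 'I_d) : phi (kvar k i) = v i.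
Proof.
rewrite phi_eq /kvar /=.
have -> : sc 0 = 0 by rewrite /sc kscale0.
rewrite add0r (bigD1 i) //= big1 ?addr0.
  have -> : deriv i (fun w => (w == [:: nat_of_ord i])%:R) = 1.
    by apply: fext => w; rewrite /deriv -oneE /kone eqseq_cons eqxx.
  by rewrite phi1 mulr1.
move=> x hx; have -> : deriv x (fun w => (w == [:: nat_of_ord i])%:R) = 0.
  apply: fext => w; rewrite /deriv eqseq_cons.
  have -> : (nat_of_ord x == nat_of_ord i) = false.
    by apply/negbTE; rewrite (inj_eq val_inj).
  by [].
by rewrite phi0 mulr0.
Qed.


End Subst.

Section FS.
Variable k : fieldType.
Local Notation S := (kser k).

Definition fs (f : S) := exists s : seq word, forall w, f w != 0 -> w \in s.

Lemma fs0 : fs 0. Proof. by exists [::] => w; rewrite zeroS eqxx. Qed.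
Lemma fs1 : fs 1.
Proof. exists [:: [::]] => w; rewrite -oneE /kone; case: (w =P [::]) => [->|] //=; by rewrite eqxx. Qed.
Lemma fs_add f g : fs f -> fs g -> fs (f + g).
Proof.
move=> [s1 h1] [s2 h2]; exists (s1 ++ s2) => w; rewrite addS mem_cat.
case: (f w =P 0) => [->|/eqP /h1 -> //]; rewrite add0r => /h2 ->; by rewrite orbT.
Qed.
Lemma fs_scale c f : fs f -> fs (kscale c f).
Proof.
move=> [s h]; exists s => w; rewrite scaleS; apply: contraR => /negbTE hw.
by apply/eqP; move: (contraFF (@h w) hw) => /negbFE/eqP ->; rewrite mulr0.
Qed.
Lemma fs_opp f : fs f -> fs (- f).
Proof. by move=> H; rewrite -kscaleN1; exact: fs_scale. Qed.
Lemma fs_sum I (r : seq I) (F : I -> S) : (forall i, fs (F i)) -> fs (\sum_(i <- r) F i).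
Proof. by move=> H; elim/big_rec: _ => [|i x _ hx]; [exact: fs0 | exact: fs_add]. Qed.

Lemma fs_mul f g : fs f -> fs g -> fs (f * g).
Proof.
move=> [s1 h1] [s2 h2]; exists [seq a ++ b | a <- s1, b <- s2] => w hw.
have [i Hi] : exists i : 'I_(size w).+1, f (take i w) * g (drop i w) != 0.
  apply/existsP; move: hw; apply: contraR => /existsPn H.
  rewrite -mulE /kmul big1 // => i _; exact/eqP/negbNE/H.
rewrite -(cat_take_drop i w); apply: allpairs_f.
  by apply: h1; move: Hi; apply: contra => /eqP ->; rewrite mul0r.
by apply: h2; move: Hi; apply: contra => /eqP ->; rewrite mulr0.
Qed.

Definition mono (u : word) : S := fun w => (w == u)%:R.

Lemma mono_nil : mono [::] = 1. Proof. by []. Qed.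
Lemma mono_cons x u : mono (x :: u) = kvar k x * mono u.
Proof.
apply: fext => w; rewrite -mulE kmulE /mono /kvar.
case: w => [|y w] /=; first by rewrite big_nat1 /= mul0r.
rewrite big_nat_recl // take0 /= mul0r add0r big_nat_recl // take0 drop0 /=.
rewrite big_nat big1 ?addr0.
  rewrite !eqseq_cons eqxx andbT; case: (y == x); case: (w == u) => /=; by rewrite ?mulr1 ?mulr0.
move=> i /andP[_ hi]; rewrite eqseq_cons.
have : size (take i.+1 w) = i.+1 by rewrite size_takel.
by case: (take i.+1 w) => //= ? ? _; rewrite andbF mul0r.
Qed.

Lemma fs_decomp f : fs f -> exists s : seq word,
  f = \sum_(u <- s) kscale (f u) (mono u).
Proof.
move=> [s0 h]; exists (undup s0); apply: fext => w; rewrite sumS.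
case: (boolP (w \in undup s0)) => hw.
  rewrite (bigD1_seq w) ?undup_uniq //= scaleS /mono eqxx mulr1 big1 ?addr0 //.
  by move=> u hu; rewrite scaleS /mono eq_sym (negbTE hu) mulr0.
rewrite big1_seq; last first.
  move=> u /andP[_ hu]; rewrite scaleS /mono.
  by case: eqP hu => [<-|]; rewrite ?(negbTE hw) // mulr0.
rewrite mem_undup in hw; apply/eqP; apply: contraR hw; exact: h.
Qed.

End FS.

Section PhiFS.
Variable k : fieldType.
Local Notation S := (kser k).
Variables (d : nat) (v : 'I_d -> S).
Hypothesis hv0 : forall x, v x [::] = 0.
Hypothesis hvfs : forall x, fs (v x).

Lemma phi_sum I (r : seq I) (F : I -> S) :
  phi v (\sum_(i <- r) F i) = \sum_(i <- r) phi v (F i).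
Proof. exact: (big_morph _ (phi_add v) (phi0 v)). Qed.

Lemma fs_sc c : fs (sc c : S). Proof. exact: fs_scale (fs1 k). Qed.

Lemma phi_fs f : fs f -> fs (phi v f).
Proof.
move=> /fs_decomp [s ->]; rewrite phi_sum; apply: fs_sum => u.
rewrite phi_scale; apply: fs_scale.
elim: u => [|x u IH]; first by rewrite mono_nil phi1 //; exact: fs1.
rewrite mono_cons phi_mul //; apply: fs_mul => //.
rewrite phi_eq //; apply: fs_add; first exact: fs_sc.
apply: fs_sum => y; apply: fs_mul => //.
have -> : deriv y (kvar k x) = sc ((nat_of_ord y == x)%:R).
  apply: fext => w; rewrite /deriv /kvar /sc scaleS -oneE /kone eqseq_cons.
  by case: (_ == x); case: (w == [::]) => /=; rewrite ?mulr1 ?mulr0.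
rewrite /sc phi_scale // phi1 //; exact: fs_sc.
Qed.

End PhiFS.


Section Main.
Variable k : fieldType.
Local Notation S := (kser k).

Lemma kprodE (l : seq S) : kprod l = \prod_(x <- l) x.
Proof. by elim: l => [|a l IH]; rewrite ?big_nil ?big_cons //= -IH. Qed.

Lemma SdE d (v : 'I_d -> S) : Sd v = Ssym v.
Proof.
rewrite /Sd /Ssym.
change (\sum_(s : 'S_d) kprod [seq v (s i) | i <- enum 'I_d] = \sum_(s : 'S_d) \prod_(i < d) v (s i)).
apply: eq_bigr => s _; rewrite kprodE big_map.
have -> : enum 'I_d = index_enum 'I_d by rewrite enumT; unlock index_enum.
by [].
Qed.


Lemma kpoly0 : kpoly (0 : S). Proof. by split => //; exact: fs0. Qed.
Lemma kpolyD (f g : S) : kpoly f -> kpoly g -> kpoly (f + g).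
Proof. by move=> [f0 hf] [g0 hg]; split; [rewrite addS f0 g0 addr0 | exact: fs_add]. Qed.
Lemma kpolyZ c (f : S) : kpoly f -> kpoly (kscale c f).
Proof. by move=> [f0 hf]; split; [rewrite scaleS f0 mulr0 | exact: fs_scale]. Qed.
Lemma kpolyN (f : S) : kpoly f -> kpoly (- f).
Proof. by move=> H; rewrite -kscaleN1; exact: kpolyZ. Qed.
Lemma kpolyM (f g : S) : kpoly f -> kpoly g -> kpoly (f * g).
Proof. by move=> [f0 hf] [g0 hg]; split; [rewrite mulS0 f0 mul0r | exact: fs_mul]. Qed.
Lemma kpoly_sum I (r : seq I) (F : I -> S) : (forall i, kpoly (F i)) -> kpoly (\sum_(i <- r) F i).
Proof. by move=> H; elim/big_rec: _ => [|i x _ hx]; [exact: kpoly0 | exact: kpolyD]. Qed.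
Lemma kpoly_var i : kpoly (kvar k i).
Proof. split => //; exists [:: [:: i]] => w; rewrite /kvar; case: (w =P [:: i]) => [->|] //=; by rewrite mem_seq1 eqxx. Qed.

Lemma kpoly_prod n (F : 'I_n.+1 -> S) : (forall i, kpoly (F i)) -> kpoly (\prod_(i < n.+1) F i).
Proof.
move=> H; rewrite big_ord_recl; split.
  by rewrite mulS0; case: (H ord0) => -> _; rewrite mul0r.
have fsP : forall m (G : 'I_m -> S), (forall i, kpoly (G i)) -> fs (\prod_(i < m) G i).
  move=> m G HG; elim/big_rec: _ => [|i x _ hx]; first exact: fs1.
  by apply: fs_mul => //; case: (HG i).
by apply: fs_mul; [case: (H ord0) | apply: fsP => i; exact: H].
Qed.

Lemma kpoly_Ssym n (f : 'I_n.+1 -> S) : (forall i, kpoly (f i)) -> kpoly (Ssym f).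
Proof. by move=> H; apply: kpoly_sum => s; apply: kpoly_prod => i. Qed.

Lemma kpoly_cons0 n (u : S) (v : 'I_n -> S) :
  kpoly u -> (forall i, kpoly (v i)) -> forall i, kpoly (cons0 u v i).
Proof. by move=> hu hv i; rewrite /cons0; case: (unlift _ _). Qed.

Lemma kpoly_upd n (v : 'I_n -> S) a x :
  (forall i, kpoly (v i)) -> kpoly x -> forall i, kpoly (upd v a x i).
Proof. by move=> hv hx i; rewrite /upd; case: (_ == _). Qed.


Lemma alg_endo_phi d (v : 'I_d -> S) : (forall i, kpoly (v i)) -> alg_endo (phi v).
Proof.
move=> hv; have hv0 : forall x, v x [::] = 0 by move=> x; case: (hv x).
have hfs : forall x, fs (v x) by move=> x; case: (hv x).
split; first by move=> f [f0 hf]; split; [rewrite phi_at0 | exact: phi_fs].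
split; first by move=> f g _ _; rewrite addE phi_add.
split; first by move=> c f _; rewrite phi_scale.
by move=> f g _ _; rewrite mulE phi_mul.
Qed.

Lemma phi_Sdx d (v : 'I_d -> S) : (forall i, kpoly (v i)) -> phi v (Sd_x k d) = Ssym v.
Proof.
move=> hv; have hv0 : forall x, v x [::] = 0 by move=> x; case: (hv x).
rewrite /Sd_x SdE /Ssym (big_morph _ (phi_add v) (phi0 v)).
apply: eq_bigr => s _; rewrite (big_morph _ (phi_mul hv0) (phi1 hv0)).
by apply: eq_bigr => i _; rewrite phi_var.
Qed.

Inductive W d : S -> Prop :=
| W0 : W d 0
| WD f g : W d f -> W d g -> W d (f + g)
| WZ c f : W d f -> W d (kscale c f)
| WS (v : 'I_d -> S) : (forall i, kpoly (v i)) -> W d (Ssym v).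

Lemma W_sum d I (r : seq I) (F : I -> S) : (forall i, W d (F i)) -> W d (\sum_(i <- r) F i).
Proof. by move=> H; elim/big_rec: _ => [|i x _ hx]; [exact: W0 | exact: WD]. Qed.
Lemma W_opp d f : W d f -> W d (- f).
Proof. by move=> H; rewrite -kscaleN1; exact: WZ. Qed.
Lemma W_sub d f g : W d f -> W d g -> W d (f - g).
Proof. by move=> ? ?; apply: WD => //; exact: W_opp. Qed.
Lemma W_muln d f n : W d f -> W d (f *+ n).
Proof. by move=> H; elim: n => [|n IH]; [exact: W0 | rewrite mulrS; exact: WD]. Qed.

Lemma W_kpoly d f : (0 < d)%N -> W d f -> kpoly f.
Proof.
case: d f => // d f _; elim => [|? ? _ ? _ ?|? ? _ ?|v hv].
- exact: kpoly0.
- exact: kpolyD.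
- exact: kpolyZ.
- exact: kpoly_Ssym.
Qed.

Lemma evalMn (h : S) n w : (h *+ n) w = h w *+ n.
Proof. by elim: n => [|n IH]; rewrite ?mulr0n // !mulrS addS IH. Qed.

Lemma unmuln (h : S) n : (n%:R : k) != 0 -> h = kscale (n%:R^-1) (h *+ n).
Proof.
by move=> hn; apply: fext => w; rewrite scaleS evalMn -[h w *+ n]mulr_natl mulrA mulVf // mul1r.
 
Qed.

Lemma W_ideal d f g : (d%:R : k) != 0 -> W d f -> kpoly g -> W d (f * g) /\ W d (g * f).
Proof.
move=> hd + hg; elim => [|f1 f2 _ [h1 h1'] _ [h2 h2']|c f1 _ [h h']|v hv].
- by rewrite mul0r mulr0; split; exact: W0.
- by rewrite mulrDl mulrDr; split; exact: WD.
- by rewrite kscale_mull kscale_mulr; split; exact: WZ.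
- have hc := kpoly_cons0 hg hv.
  split.
  + rewrite (unmuln (Ssym v * g) hd); apply: WZ; rewrite right_ident.
    apply: W_sub.
      apply: W_sum => p; apply: W_sum => a; apply: WS.
      by apply: kpoly_upd => [i|]; [exact: hc | apply: kpolyM].
    apply: W_muln; apply: W_sum => a; apply: WS.
    by apply: kpoly_upd => //; apply: kpolyM.
  + rewrite (unmuln (g * Ssym v) hd); apply: WZ; rewrite left_ident.
    apply: W_sub.
      apply: W_sum => p; apply: W_sum => a; apply: WS.
      by apply: kpoly_upd => [i|]; [exact: hc | apply: kpolyM].
    apply: W_muln; apply: W_sum => a; apply: WS.
    by apply: kpoly_upd => //; apply: kpolyM.
Qed.


Section Endo.
Variable psi : S -> S.
Hypothesis hpsi : alg_endo psi.

Lemma psi_kpoly f : kpoly f -> kpoly (psi f).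
Proof. by case: hpsi => H _; exact: H. Qed.
Lemma psi_add f g : kpoly f -> kpoly g -> psi (f + g) = psi f + psi g.
Proof. by case: hpsi => _ [H _]; exact: H. Qed.
Lemma psi_scale c f : kpoly f -> psi (kscale c f) = kscale c (psi f).
Proof. by case: hpsi => _ [_ [H _]]; exact: H. Qed.
Lemma psi_mul f g : kpoly f -> kpoly g -> psi (f * g) = psi f * psi g.
Proof. by case: hpsi => _ [_ [_ H]]; exact: H. Qed.

Lemma psi0 : psi 0 = 0.
Proof.
have := psi_add kpoly0 kpoly0; rewrite addr0 => h.
by apply: (addrI (psi 0)); rewrite -h addr0.
Qed.

Lemma psi_sum I (r : seq I) (F : I -> S) : (forall i, kpoly (F i)) ->
  psi (\sum_(i <- r) F i) = \sum_(i <- r) psi (F i).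
Proof.
move=> H; elim: r => [|a r IH]; first by rewrite !big_nil psi0.
by rewrite !big_cons psi_add ?IH //; exact: kpoly_sum.
Qed.

Lemma psi_prod n (F : 'I_n.+1 -> S) : (forall i, kpoly (F i)) ->
  psi (\prod_(i < n.+1) F i) = \prod_(i < n.+1) psi (F i).
Proof.
elim: n F => [|n IH] F H; first by rewrite !big_ord1.
rewrite big_ord_recl psi_mul //; last by apply: kpoly_prod => i; exact: H.
by rewrite IH // [RHS]big_ord_recl.
Qed.

Lemma psi_Ssym n (v : 'I_n.+1 -> S) : (forall i, kpoly (v i)) ->
  psi (Ssym v) = Ssym (fun i => psi (v i)).
Proof.
move=> H; rewrite /Ssym psi_sum; last by move=> s; apply: kpoly_prod.
by apply: eq_bigr => s _; rewrite psi_prod.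
Qed.
End Endo.

Lemma W_Tspace d : (0 < d)%N -> is_Tspace (W d).
Proof.
case: d => // d _; split.
  split; first by move=> f; apply: W_kpoly.
  split; first exact: W0.
  split; first by move=> f g; exact: WD.
  by move=> c f; exact: WZ.
move=> psi f hpsi; elim => [|f1 f2 h1 IH1 h2 IH2|c f1 h1 IH|v hv].
- by rewrite (psi0 hpsi); exact: W0.
- by rewrite psi_add //; [exact: WD | exact: W_kpoly h1 | exact: W_kpoly h2].
- by rewrite psi_scale //; [exact: WZ | exact: W_kpoly h1].
- rewrite psi_Ssym //; apply: WS => i; apply: psi_kpoly => //.
Qed.

Lemma W_Sdx d : (0 < d)%N -> W d (Sd_x k d).
Proof.
move=> _; rewrite /Sd_x SdE; apply: WS => i; exact: kpoly_var.
Qed.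

Lemma W_sub_T d V : is_Tspace V -> V (Sd_x k d) -> forall f, W d f -> V f.
Proof.
move=> [[_ [V0 [VD VZ]]] VT] VS f; elim => [|f1 f2 _ h1 _ h2|c f1 _ h|v hv].
- exact: V0.
- exact: VD.
- exact: VZ.
- rewrite -(phi_Sdx hv); apply: VT => //; exact: alg_endo_phi.
Qed.

Lemma R1_W d f : (0 < d)%N -> R1 d f <-> W d f.
Proof.
move=> hd; split.
  by move=> H; apply: H; [exact: W_Tspace | move=> g ->; exact: W_Sdx].
move=> hW V hV hS; exact: (W_sub_T hV (hS _ erefl) hW).
Qed.

End Main.


Lemma Tspace_iff (k : fieldType) (V V' : kser k -> Prop) :
  (forall f, V f <-> V' f) -> is_Tspace V -> is_Tspace V'.
Proof.
move=> E [[Vp [V0 [VD VZ]]] VT]; split.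
  split; first by move=> f /E; exact: Vp.
  split; first by apply/E.
  split; first by move=> f g /E hf /E hg; apply/E; exact: VD.
  by move=> c f /E hf; apply/E; exact: VZ.
by move=> phi f hphi /E hf; apply/E; exact: VT.
Qed.

Lemma mainTheorem2_aux (k : fieldType) (d : nat) :
  (0 < d)%N -> (d%:R : k) != 0 ->
  is_ideal (@R1 k d) /\ (forall f, @R1 k d f <-> @R2 k d f).
Proof.
move=> hd hk.
have E : forall f, R1 d f <-> W d f := fun f => R1_W f hd.
have TS : is_Tspace (@R1 k d).
  by apply: (Tspace_iff (V := W d)) => [f|]; [split => /E | exact: W_Tspace].
have ID : is_ideal (@R1 k d).
  split; first by case: TS.
  move=> f g /E hf hg; rewrite !mulE.
  by have [h1 h2] := W_ideal hk hf hg; split; apply/E.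
split => // f; split.
  by move=> hf V hV hS; apply: hS; left.
move=> hf; apply: hf => // g [//|[u [v [hu [hv ->]]]]].
case: ID => _ /(_ u (Sd v) hu) [] // .
case: d hd hk E TS v hv {hu} => // d _ _ _ _ v hv.
rewrite SdE; exact: kpoly_Ssym.
Qed.


Unset Implicit Arguments.
Theorem mainTheorem2 (k : fieldType) (d : nat) :
  (0 < d)%N -> (d%:R : k) != 0 ->
  is_ideal (@R1 k d) /\ (forall f, @R1 k d f <-> @R2 k d f).
Proof. exact: mainTheorem2_aux. Qed.
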